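(* Let $\mathbf{k}=(k_1,k_2,\ldots)\in\mathcal{T}$ and set $\Delta_r=\zeta^{\star}(k_1,\ldots,k_r,1)-\zeta^{\star}(k_1,\ldots,k_r)$. Then $\lim_{r\to\infty}\Delta_r=0$.
   Context: $\zeta^{\star}(k_1,\ldots,k_r)=\sum_{n_1\geq\cdots\geq n_r\geq 1}\frac{1}{n_1^{k_1}\cdots n_r^{k_r}}$ for $k_1\geq2$, $k_2,\ldots,k_r\geq1$. $\mathcal{T}$ is the set of infinite sequences $(k_1,k_2,\ldots)$ of positive integers with $k_1\geq2$ and such that if $k_1=2$ then $k_s\geq2$ for some $s\geq2$. *)

(* Defs.v *)
From Stdlib Require Import Reals Lra Lia List.
From Coquelicot Require Import Coquelicot.
Open Scope R_scope.

(* Truncated multiple zeta-star value: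
   Hstar [k1;...;kr] N = sum_{N >= n1 >= n2 >= ... >= nr >= 1} 1/(n1^k1 ... nr^kr).
   (Hstar [] N = 1, the empty product.) *)
Fixpoint Hstar (ks : list nat) (N : nat) : R :=
  match ks with
  | nil => 1
  | k :: ks' => sum_n_m (fun n => / (INR n ^ k) * Hstar ks' n) 1 N
  end.

(* zeta^*(k1,...,kr) = lim_{N -> oo} of the truncated sums
   (the series has nonnegative terms; it converges when k1 >= 2). *)
Definition zeta_star (ks : list nat) : R := real (Lim_seq (fun N => Hstar ks N)).

(* Infinite index sequences k = (k_1, k_2, ...), stored 1-based as k : nat -> nat
   (the value k 0 is irrelevant).  Membership in the set T of the paper. *)
Definition in_T (k : nat -> nat) : Prop :=
  (forall i, (1 <= i)%nat -> (1 <= k i)%nat) /\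
  (2 <= k 1%nat)%nat /\
  (k 1%nat = 2%nat -> exists s, (2 <= s)%nat /\ (2 <= k s)%nat).

Definition prefix (k : nat -> nat) (r : nat) : list nat := map k (seq 1%nat r).

Definition zs_Delta (k : nat -> nat) (r : nat) : R :=
  zeta_star (prefix k r ++ 1%nat :: nil) - zeta_star (prefix k r).

(* Main.v *)
Require Import Defs.
From Stdlib Require Import Reals Lra Lia List.
From Coquelicot Require Import Coquelicot.
Open Scope R_scope.

Definition S1 (f : nat -> R) (N : nat) : R := sum_n_m f 1 N.

Lemma S1_0 f : sum_n_m f 1 0 = 0.
Proof. rewrite sum_n_m_zero; [reflexivity|lia]. Qed.

Lemma S1_S f N : sum_n_m f 1 (S N) = sum_n_m f 1 N + f (S N).
Proof.
  destruct N.
  - rewrite S1_0, sum_n_n. lra.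
  - rewrite sum_n_Sm; [reflexivity|lia].
Qed.

Lemma S1_le f g N : (forall m, (1 <= m <= N)%nat -> f m <= g m) ->
  sum_n_m f 1 N <= sum_n_m g 1 N.
Proof.
  induction N; intros H.
  - rewrite !S1_0; lra.
  - rewrite !S1_S. assert (f (S N) <= g (S N)) by (apply H; lia).
    assert (sum_n_m f 1 N <= sum_n_m g 1 N) by (apply IHN; intros; apply H; lia). lra.
Qed.

Lemma S1_nonneg f N : (forall m, (1 <= m <= N)%nat -> 0 <= f m) -> 0 <= sum_n_m f 1 N.
Proof.
  induction N; intros H. rewrite S1_0; lra.
  rewrite S1_S. assert (0 <= f (S N)) by (apply H; lia).
  assert (0 <= sum_n_m f 1 N) by (apply IHN; intros; apply H; lia). lra.
Qed.

Lemma S1_scal c f N : sum_n_m (fun m => c * f m) 1 N = c * sum_n_m f 1 N.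
Proof. induction N. rewrite !S1_0; lra. rewrite !S1_S, IHN; lra. Qed.

Lemma S1_minus f g N : sum_n_m (fun m => f m - g m) 1 N = sum_n_m f 1 N - sum_n_m g 1 N.
Proof. induction N. rewrite !S1_0; lra. rewrite !S1_S, IHN; lra. Qed.

Fixpoint P (a : R) (m : nat) : R :=
  match m with
  | O => 1
  | S m' => match m' with O => 1 | S _ => P a m' * (INR m / (INR m - a)) end
  end.

Lemma P_1 a : P a 1 = 1.
Proof. reflexivity. Qed.

Lemma P_S a m : (1 <= m)%nat -> P a (S m) = P a m * (INR (S m) / (INR (S m) - a)).
Proof. intros H. destruct m. lia. reflexivity. Qed.

Lemma INR_ge1 m : (1 <= m)%nat -> 1 <= INR m.
Proof. intros H. apply (le_INR 1) in H. simpl in H. lra. Qed.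

Lemma P_pos a m : a < 2 -> 0 < P a m.
Proof.
  intros Ha. induction m. simpl; lra.
  destruct m. simpl; lra.
  rewrite P_S by lia. apply Rmult_lt_0_compat; auto.
  assert (1 <= INR (S m)) by (apply INR_ge1; lia).
  rewrite S_INR. apply Rdiv_lt_0_compat; lra.
Qed.

Lemma P_ge1 a m : 0 <= a < 2 -> 1 <= P a m.
Proof.
  intros Ha. induction m. simpl; lra.
  destruct m. simpl; lra.
  rewrite P_S by lia.
  assert (2 <= INR (S (S m))) by (rewrite !S_INR; pose proof (pos_INR m); lra).
  assert (1 <= INR (S (S m)) / (INR (S (S m)) - a)).
  { apply Rle_div_r; lra. }
  nra.
Qed.

Lemma P_rec a m : a < 2 -> (1 <= m)%nat ->
  P a (S m) - P a m = a / INR (S m) * P a (S m).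
Proof.
  intros Ha Hm. rewrite P_S by lia.
  assert (1 <= INR m) by (apply INR_ge1; lia).
  rewrite S_INR. field. lra.
Qed.

Lemma P_shift a m : a < 2 -> (1 <= m)%nat ->
  P a m * (2 - a) = P (a - 1) m * (INR m - a + 1).
Proof.
  intros Ha Hm. induction m. lia.
  destruct m. simpl. lra.
  rewrite !(P_S _ (S m)) by lia.
  assert (IH := IHm ltac:(lia)).
  assert (Hx : INR (S (S m)) = INR (S m) + 1) by (rewrite S_INR; ring).
  assert (1 <= INR (S m)) by (apply INR_ge1; lia).
  rewrite Hx. 
  replace (P a (S m) * ((INR (S m) + 1) / (INR (S m) + 1 - a)) * (2 - a))
    with ((P a (S m) * (2 - a)) * ((INR (S m) + 1) / (INR (S m) + 1 - a))) by ring.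
  rewrite IH. field. lra.
Qed.

Lemma Rinv_pos_nat m : (1 <= m)%nat -> 0 < / INR m.
Proof. intros H. apply Rinv_0_lt_compat. pose proof (INR_ge1 m H). lra. Qed.

Lemma T1 a n : 0 < a < 2 -> (1 <= n)%nat ->
  sum_n_m (fun m => / INR m * (P a m - 1)) 1 n <= (P a n - 1) / a.
Proof.
  intros Ha Hn. induction n. lia.
  destruct n. rewrite sum_n_n. simpl. unfold Rdiv. lra.
  rewrite S1_S. specialize (IHn ltac:(lia)).
  pose proof (P_rec a (S n) ltac:(lra) ltac:(lia)) as HR.
  pose proof (Rinv_pos_nat (S (S n)) ltac:(lia)).
  pose proof (P_pos a (S (S n)) ltac:(lra)).
  assert (/ INR (S (S n)) * (P a (S (S n)) - 1) <= (P a (S (S n)) - P a (S n)) / a).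
  { rewrite HR. replace (a / INR (S (S n)) * P a (S (S n)) / a) with (/ INR (S (S n)) * P a (S (S n))) by (field; assert (INR (S (S n)) <> 0) by (apply not_0_INR; lia); split; auto; lra).
    nra. }
  assert (HH : (P a (S (S n)) - 1) / a = (P a (S n) - 1) / a + (P a (S (S n)) - P a (S n)) / a) by (field; lra).
  rewrite HH. lra.
Qed.

Ltac inrnz n := assert (INR n <> 0) by (apply not_0_INR; lia).

Lemma Hbase a n : 0 < a < 2 -> (1 <= n)%nat ->
  0 <= sum_n_m (fun m => / (INR m ^ 1) * 1) 1 n - 1 <= (P a n - 1) / a.
Proof.
  intros Ha Hn. induction n. lia.
  destruct n. rewrite sum_n_n. simpl. unfold Rdiv. split; lra.
  rewrite S1_S. specialize (IHn ltac:(lia)).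
  pose proof (P_rec a (S n) ltac:(lra) ltac:(lia)) as HR.
  pose proof (Rinv_pos_nat (S (S n)) ltac:(lia)).
  pose proof (P_ge1 a (S (S n)) ltac:(lra)).
  inrnz (S (S n)).
  assert (E1 : / (INR (S (S n)) ^ 1) * 1 = / INR (S (S n))) by (simpl; field; auto).
  assert (E2 : (P a (S (S n)) - 1) / a = (P a (S n) - 1) / a + / INR (S (S n)) * P a (S (S n))).
  { replace (P a (S (S n)) - 1) with ((P a (S n) - 1) + (P a (S (S n)) - P a (S n))) by ring.
    rewrite HR. field. split; auto; lra. }
  rewrite E1, E2. split; nra.
Qed.

Lemma T2 a n : 0 < a < 2 -> (1 <= n)%nat ->
  sum_n_m (fun m => / INR m * P a m) 1 n <= (1 + / a) * P a n.
Proof.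
  intros Ha Hn. induction n. lia.
  destruct n. rewrite sum_n_n. simpl.
  assert (0 < / a) by (apply Rinv_0_lt_compat; lra). lra.
  rewrite S1_S. specialize (IHn ltac:(lia)).
  pose proof (P_rec a (S n) ltac:(lra) ltac:(lia)) as HR.
  pose proof (Rinv_pos_nat (S (S n)) ltac:(lia)).
  pose proof (P_ge1 a (S (S n)) ltac:(lra)).
  inrnz (S (S n)).
  assert (E2 : (1 + / a) * P a (S (S n)) = (1 + / a) * P a (S n) + (a + 1) * (/ INR (S (S n)) * P a (S (S n)))).
  { replace (P a (S (S n))) with (P a (S n) + (P a (S (S n)) - P a (S n))) at 1 by ring.
    rewrite HR. field. split; auto; lra. }
  rewrite E2.
  assert (0 <= a * (/ INR (S (S n)) * P a (S (S n)))).
  { apply Rmult_le_pos; [lra|]. apply Rmult_le_pos; lra. }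
  lra.
Qed.

Lemma Tq n : (1 <= n)%nat ->
  sum_n_m (fun m => / INR m * P (1/2 - 1) m) 1 n <= 3 - 2 * P (1/2 - 1) n.
Proof.
  intros Hn. induction n. lia.
  destruct n. rewrite sum_n_n. simpl. lra.
  rewrite S1_S. specialize (IHn ltac:(lia)).
  pose proof (P_rec (1/2 - 1) (S n) ltac:(lra) ltac:(lia)) as HR.
  inrnz (S (S n)).
  assert (E : / INR (S (S n)) * P (1/2 - 1) (S (S n)) = 2 * (P (1/2 - 1) (S n) - P (1/2 - 1) (S (S n)))).
  { replace (P (1/2 - 1) (S n) - P (1/2 - 1) (S (S n))) with (- (P (1/2 - 1) (S (S n)) - P (1/2 - 1) (S n))) by ring.
    rewrite HR. field. auto. }
  rewrite E. lra.
Qed.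

Lemma E1 m : (1 <= m)%nat ->
  / (INR m ^ 2) * P (1/2) m <= / INR m * P (1/2 - 1) m.
Proof.
  intros Hm. pose proof (INR_ge1 m Hm). inrnz m.
  pose proof (P_shift (1/2) m ltac:(lra) Hm) as HS.
  pose proof (P_pos (1/2 - 1) m ltac:(lra)).
  assert (HP : P (1/2) m = P (1/2 - 1) m * (INR m + 1/2) * (2/3)).
  { replace (P (1/2) m) with (P (1/2) m * (2 - 1/2) * (2/3)) by field. rewrite HS. field. }
  rewrite HP.
  replace (/ (INR m ^ 2) * (P (1 / 2 - 1) m * (INR m + 1 / 2) * (2 / 3)))
    with (/ INR m * P (1/2 - 1) m * ((INR m + 1/2) * (2/3) / INR m)) by (simpl; field; auto).
  assert ((INR m + 1/2) * (2/3) / INR m <= 1) by (apply Rle_div_l; lra).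
  assert (0 < / INR m * P (1/2 - 1) m) by (apply Rmult_lt_0_compat; [apply Rinv_0_lt_compat|]; lra).
  nra.
Qed.

Lemma E2 m : (1 <= m)%nat ->
  / (INR m ^ 2) * P (3/2) m <= 2 * (/ INR m * P (1/2) m).
Proof.
  intros Hm. pose proof (INR_ge1 m Hm). inrnz m.
  pose proof (P_shift (3/2) m ltac:(lra) Hm) as HS.
  replace (3/2 - 1) with (1/2) in HS by field.
  pose proof (P_pos (1/2) m ltac:(lra)).
  assert (HP : P (3/2) m = P (1/2) m * (2 * INR m - 1)).
  { replace (P (3/2) m) with (P (3/2) m * (2 - 3/2) * 2) by field. rewrite HS. field. }
  rewrite HP.
  replace (/ (INR m ^ 2) * (P (1/2) m * (2 * INR m - 1)))
    with (/ INR m * P (1/2) m * ((2 * INR m - 1) / INR m)) by (simpl; field; auto).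
  assert ((2 * INR m - 1) / INR m <= 2) by (apply Rle_div_l; lra).
  assert (0 < / INR m * P (1/2) m) by (apply Rmult_lt_0_compat; [apply Rinv_0_lt_compat|]; lra).
  nra.
Qed.

Lemma T3 n : sum_n_m (fun m => / (INR m ^ 2) * P (1/2) m) 1 n <= 3.
Proof.
  destruct n. rewrite S1_0; lra.
  eapply Rle_trans. apply S1_le. intros m Hm. apply E1. lia.
  pose proof (Tq (S n) ltac:(lia)). pose proof (P_pos (1/2 - 1) (S n) ltac:(lra)). lra.
Qed.

Definition d (ks : list nat) (N : nat) : R := Hstar (ks ++ 1%nat :: nil) N - Hstar ks N.

Lemma Hstar_cons k l N : Hstar (k :: l) N = sum_n_m (fun n => / (INR n ^ k) * Hstar l n) 1 N.
Proof. reflexivity. Qed.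

Lemma d_cons k l N : d (k :: l) N = sum_n_m (fun m => / (INR m ^ k) * d l m) 1 N.
Proof.
  unfold d. change ((k :: l) ++ 1%nat :: nil) with (k :: (l ++ 1%nat :: nil)).
  rewrite !Hstar_cons. induction N. rewrite !S1_0; lra.
  rewrite !S1_S. rewrite <- IHN. ring.
Qed.

Lemma d_nil N : d nil N = sum_n_m (fun m => / (INR m ^ 1) * 1) 1 N - 1.
Proof. reflexivity. Qed.

Lemma inv_pow_pos m k : (1 <= m)%nat -> 0 < / (INR m ^ k).
Proof. intros H. apply Rinv_0_lt_compat, pow_lt. pose proof (INR_ge1 m H); lra. Qed.

Lemma inv_pow_le m a b : (1 <= m)%nat -> (a <= b)%nat -> / (INR m ^ b) <= / (INR m ^ a).
Proof.
  intros H Hab. apply Rinv_le_contravar. apply pow_lt. pose proof (INR_ge1 m H); lra.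
  apply Rle_pow; auto. apply INR_ge1; auto.
Qed.

Lemma inv1 m : / (INR m ^ 1) = / INR m.
Proof. simpl. rewrite Rmult_1_r. reflexivity. Qed.

Lemma Hstar_nonneg ks N : 0 <= Hstar ks N.
Proof.
  revert N. induction ks as [|k l IH]; intros N. simpl; lra.
  rewrite Hstar_cons. apply S1_nonneg. intros m Hm.
  apply Rmult_le_pos; [left; apply inv_pow_pos; lia | apply IH].
Qed.

Lemma Hstar_mono ks N : Hstar ks N <= Hstar ks (S N).
Proof.
  destruct ks as [|k l]. simpl; lra.
  rewrite !Hstar_cons, S1_S.
  assert (0 <= / (INR (S N) ^ k) * Hstar l (S N)).
  { apply Rmult_le_pos; [left; apply inv_pow_pos; lia | apply Hstar_nonneg]. }
  lra.
Qed.

Definition ge1 (ks : list nat) := List.Forall (fun k => (1 <= k)%nat) ks.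

Lemma G1 ks : ge1 ks -> forall m, (1 <= m)%nat ->
  0 <= d ks m <= (2/3) ^ (S (length ks)) * (P (3/2) m - 1).
Proof.
  induction ks as [|k l IH]; intros Hks m Hm.
  - rewrite d_nil. pose proof (Hbase (3/2) m ltac:(lra) Hm) as [H1 H2].
    split; auto. simpl length. replace ((2/3) ^ 1 * (P (3/2) m - 1)) with ((P (3/2) m - 1) / (3/2)) by field. auto.
  - inversion Hks as [|? ? Hk Hl]; subst. specialize (IH Hl).
    set (c := (2/3) ^ (S (length l))).
    assert (Hc : 0 <= c) by (apply pow_le; lra).
    rewrite d_cons. split.
    + apply S1_nonneg. intros j Hj. apply Rmult_le_pos; [left; apply inv_pow_pos; lia | apply IH; lia].
    + eapply Rle_trans. apply S1_le with (g := fun j => c * (/ INR j * (P (3/2) j - 1))).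
      { intros j Hj. destruct (IH j ltac:(lia)) as [A B].
        pose proof (inv_pow_le j 1 k ltac:(lia) Hk) as Hinv. rewrite inv1 in Hinv.
        pose proof (inv_pow_pos j k ltac:(lia)).
        apply Rle_trans with (/ INR j * d l j). nra.
        pose proof (Rinv_pos_nat j ltac:(lia)). fold c in B.
        apply Rle_trans with (/ INR j * (c * (P (3/2) j - 1))); [apply Rmult_le_compat_l; lra | right; ring]. }
      rewrite S1_scal. pose proof (T1 (3/2) m ltac:(lra) Hm).
      simpl length. replace ((2/3) ^ S (S (length l)) * (P (3/2) m - 1)) with (c * ((P (3/2) m - 1) / (3/2))).
      apply Rmult_le_compat_l; auto.
      unfold c. simpl. field.
Qed.

Lemma G2 ks : ge1 ks -> forall m, (1 <= m)%nat ->
  Hstar ks m <= 3 ^ (length ks) * P (1/2) m.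
Proof.
  induction ks as [|k l IH]; intros Hks m Hm.
  - simpl. pose proof (P_ge1 (1/2) m ltac:(lra)). lra.
  - inversion Hks as [|? ? Hk Hl]; subst. specialize (IH Hl).
    set (c := 3 ^ (length l)).
    assert (Hc : 0 <= c) by (apply pow_le; lra).
    rewrite Hstar_cons.
    eapply Rle_trans. apply S1_le with (g := fun j => c * (/ INR j * P (1/2) j)).
    { intros j Hj. pose proof (IH j ltac:(lia)) as B. pose proof (Hstar_nonneg l j) as A.
      pose proof (inv_pow_le j 1 k ltac:(lia) Hk) as Hinv. rewrite inv1 in Hinv.
      pose proof (inv_pow_pos j k ltac:(lia)).
      apply Rle_trans with (/ INR j * Hstar l j). nra.
      pose proof (Rinv_pos_nat j ltac:(lia)). fold c in B.
      apply Rle_trans with (/ INR j * (c * P (1/2) j)); [apply Rmult_le_compat_l; lra | right; ring]. }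
    rewrite S1_scal. pose proof (T2 (1/2) m ltac:(lra) Hm).
    replace (1 + / (1/2)) with 3 in H by field.
    simpl length. replace (3 ^ S (length l) * P (1/2) m) with (c * (3 * P (1/2) m)) by (unfold c; simpl; ring).
    apply Rmult_le_compat_l; auto.
Qed.

Lemma term_le1 j k X : (1 <= j)%nat -> (1 <= k)%nat -> 0 <= X ->
  / (INR j ^ k) * X <= / INR j * X.
Proof.
  intros Hj Hk HX. pose proof (inv_pow_le j 1 k Hj Hk) as Hinv. rewrite inv1 in Hinv.
  apply Rmult_le_compat_r; auto.
Qed.

Lemma StepA (X : nat -> R) a C k : 0 < a < 2 -> 0 <= C -> (1 <= k)%nat ->
  (forall j, (1 <= j)%nat -> 0 <= X j <= C * P a j) ->
  forall n, (1 <= n)%nat ->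
  0 <= sum_n_m (fun j => / (INR j ^ k) * X j) 1 n <= C * (1 + / a) * P a n.
Proof.
  intros Ha HC Hk HX n Hn. split.
  - apply S1_nonneg. intros j Hj. apply Rmult_le_pos; [left; apply inv_pow_pos; lia | apply HX; lia].
  - eapply Rle_trans. apply S1_le with (g := fun j => C * (/ INR j * P a j)).
    { intros j Hj. destruct (HX j ltac:(lia)) as [A B].
      eapply Rle_trans. apply term_le1; auto; lia.
      pose proof (Rinv_pos_nat j ltac:(lia)).
      apply Rle_trans with (/ INR j * (C * P a j)); [apply Rmult_le_compat_l; lra | right; ring]. }
    rewrite S1_scal. pose proof (T2 a n Ha Hn).
    rewrite Rmult_assoc. apply Rmult_le_compat_l; auto.
Qed.

Lemma G3 mid l c : ge1 mid -> 0 <= c ->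
  (forall m, (1 <= m)%nat -> 0 <= d l m <= c * P (1/2) m) ->
  forall n, (1 <= n)%nat -> 0 <= d (mid ++ l) n <= c * 3 ^ (length mid) * P (1/2) n.
Proof.
  intros Hmid Hc Hl. induction mid as [|k mid IH].
  - intros n Hn. simpl. rewrite Rmult_1_r. auto.
  - inversion Hmid as [|? ? Hk Hm]; subst. specialize (IH Hm).
    intros n Hn. change ((k :: mid) ++ l) with (k :: (mid ++ l)). rewrite d_cons.
    assert (0 <= c * 3 ^ length mid) by (apply Rmult_le_pos; auto; apply pow_le; lra).
    pose proof (StepA (d (mid ++ l)) (1/2) (c * 3 ^ length mid) k ltac:(lra) H Hk IH n Hn) as [A B].
    split; auto. replace (1 + / (1/2)) with 3 in B by field. simpl length.
    replace (c * 3 ^ S (length mid)) with (c * 3 ^ length mid * 3) by (simpl; ring). auto.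
Qed.

Lemma Gs (X : nat -> R) c k : 0 <= c -> (2 <= k)%nat ->
  (forall j, (1 <= j)%nat -> 0 <= X j <= c * P (3/2) j) ->
  forall n, (1 <= n)%nat ->
  0 <= sum_n_m (fun j => / (INR j ^ k) * X j) 1 n <= 6 * c * P (1/2) n.
Proof.
  intros HC Hk HX n Hn. split.
  - apply S1_nonneg. intros j Hj. apply Rmult_le_pos; [left; apply inv_pow_pos; lia | apply HX; lia].
  - eapply Rle_trans. apply S1_le with (g := fun j => (2 * c) * (/ INR j * P (1/2) j)).
    { intros j Hj. destruct (HX j ltac:(lia)) as [A B].
      pose proof (inv_pow_le j 2 k ltac:(lia) Hk).
      pose proof (inv_pow_pos j 2 ltac:(lia)).
      apply Rle_trans with (/ (INR j ^ 2) * X j). apply Rmult_le_compat_r; auto.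
      apply Rle_trans with (/ (INR j ^ 2) * (c * P (3/2) j)). apply Rmult_le_compat_l; lra.
      pose proof (E2 j ltac:(lia)).
      replace (/ (INR j ^ 2) * (c * P (3/2) j)) with (c * (/ (INR j ^ 2) * P (3/2) j)) by ring.
      replace (2 * c * (/ INR j * P (1 / 2) j)) with (c * (2 * (/ INR j * P (1 / 2) j))) by ring.
      apply Rmult_le_compat_l; auto. }
    rewrite S1_scal. pose proof (T2 (1/2) n ltac:(lra) Hn).
    replace (1 + / (1/2)) with 3 in H by field.
    replace (6 * c * P (1/2) n) with ((2 * c) * (3 * P (1/2) n)) by ring.
    apply Rmult_le_compat_l; lra.
Qed.

Lemma Gout2 (X : nat -> R) c k : 0 <= c -> (2 <= k)%nat ->
  (forall j, (1 <= j)%nat -> 0 <= X j <= c * P (1/2) j) ->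
  forall N, 0 <= sum_n_m (fun j => / (INR j ^ k) * X j) 1 N <= 3 * c.
Proof.
  intros HC Hk HX N. split.
  - apply S1_nonneg. intros j Hj. apply Rmult_le_pos; [left; apply inv_pow_pos; lia | apply HX; lia].
  - eapply Rle_trans. apply S1_le with (g := fun j => c * (/ (INR j ^ 2) * P (1/2) j)).
    { intros j Hj. destruct (HX j ltac:(lia)) as [A B].
      pose proof (inv_pow_le j 2 k ltac:(lia) Hk).
      pose proof (inv_pow_pos j 2 ltac:(lia)).
      apply Rle_trans with (/ (INR j ^ 2) * X j). apply Rmult_le_compat_r; auto.
      apply Rle_trans with (/ (INR j ^ 2) * (c * P (1/2) j)). apply Rmult_le_compat_l; lra.
      right; ring. }
    rewrite S1_scal. pose proof (T3 N).
    replace (3 * c) with (c * 3) by ring. apply Rmult_le_compat_l; lra.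
Qed.

Lemma Gout3 (X : nat -> R) c k : 0 <= c -> (3 <= k)%nat ->
  (forall j, (1 <= j)%nat -> 0 <= X j <= c * P (3/2) j) ->
  forall N, 0 <= sum_n_m (fun j => / (INR j ^ k) * X j) 1 N <= 6 * c.
Proof.
  intros HC Hk HX N. split.
  - apply S1_nonneg. intros j Hj. apply Rmult_le_pos; [left; apply inv_pow_pos; lia | apply HX; lia].
  - eapply Rle_trans. apply S1_le with (g := fun j => (2 * c) * (/ (INR j ^ 2) * P (1/2) j)).
    { intros j Hj. destruct (HX j ltac:(lia)) as [A B].
      pose proof (inv_pow_le j 3 k ltac:(lia) Hk).
      pose proof (inv_pow_pos j 3 ltac:(lia)).
      apply Rle_trans with (/ (INR j ^ 3) * X j). apply Rmult_le_compat_r; auto.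
      apply Rle_trans with (/ (INR j ^ 3) * (c * P (3/2) j)). apply Rmult_le_compat_l; lra.
      pose proof (E2 j ltac:(lia)).
      pose proof (Rinv_pos_nat j ltac:(lia)).
      pose proof (INR_ge1 j ltac:(lia)). inrnz j.
      replace (/ (INR j ^ 3) * (c * P (3/2) j)) with ((c * / INR j) * (/ (INR j ^ 2) * P (3/2) j)) by (field; auto).
      replace (2 * c * (/ (INR j ^ 2) * P (1 / 2) j)) with ((c * / INR j) * (2 * (/ INR j * P (1 / 2) j))) by (field; auto).
      apply Rmult_le_compat_l; auto. apply Rmult_le_pos; lra. }
    rewrite S1_scal. pose proof (T3 N).
    replace (6 * c) with ((2 * c) * 3) by ring.
    apply Rmult_le_compat_l; lra.
Qed.

Lemma Hbound k l : (2 <= k)%nat -> ge1 l -> forall N, Hstar (k :: l) N <= 3 * 3 ^ (length l).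
Proof.
  intros Hk Hl N. rewrite Hstar_cons.
  assert (Hc : 0 <= 3 ^ length l) by (apply pow_le; lra).
  pose proof (Gout2 (Hstar l) (3 ^ length l) k Hc Hk) as G.
  refine (proj2 (G _ N)).
  intros j Hj. split. apply Hstar_nonneg. apply G2; auto.
Qed.

Lemma ge1_app l1 l2 : ge1 l1 -> ge1 l2 -> ge1 (l1 ++ l2).
Proof. intros; apply Forall_app; split; auto. Qed.

Lemma DeltaBound k1 l e : (2 <= k1)%nat -> ge1 l ->
  (forall N, 0 <= d (k1 :: l) N <= e) ->
  0 <= zeta_star ((k1 :: l) ++ 1%nat :: nil) - zeta_star (k1 :: l) <= e.
Proof.
  intros Hk Hl Hd.
  set (u := fun N => Hstar ((k1 :: l) ++ 1%nat :: nil) N).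
  set (v := fun N => Hstar (k1 :: l) N).
  assert (Hl1 : ge1 (l ++ 1%nat :: nil)) by (apply ge1_app; auto; constructor; auto).
  assert (Hu : ex_finite_lim_seq u).
  { apply ex_finite_lim_seq_incr with (M := 3 * 3 ^ length (l ++ 1%nat :: nil)).
    intros; apply Hstar_mono. intros n. apply (Hbound k1); auto. }
  assert (Hv : ex_finite_lim_seq v).
  { apply ex_finite_lim_seq_incr with (M := 3 * 3 ^ length (l ++ 1%nat :: nil)).
    intros; apply Hstar_mono. intros n.
    apply Rle_trans with (u n). pose proof (Hd n). unfold d in H. unfold u, v. lra.
    apply (Hbound k1); auto. }
  destruct Hu as [lu Hu]. destruct Hv as [lv Hv].
  unfold zeta_star. fold u. fold v.
  rewrite (is_lim_seq_unique _ _ Hu), (is_lim_seq_unique _ _ Hv). simpl.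
  pose proof (is_lim_seq_minus' _ _ _ _ Hu Hv) as Hm.
  split.
  - pose proof (is_lim_seq_le (fun _ => 0) _ 0 (lu - lv) (fun n => proj1 (Hd n)) (is_lim_seq_const 0) Hm). simpl in H. auto.
  - pose proof (is_lim_seq_le _ (fun _ => e) (lu - lv) e (fun n => proj2 (Hd n)) Hm (is_lim_seq_const e)). simpl in H. auto.
Qed.

Lemma squeeze (w : nat -> R) K : (forall n, 0 <= w n <= K * (2/3) ^ n) -> is_lim_seq w 0.
Proof.
  intros H. apply is_lim_seq_le_le with (u := fun _ => 0) (w := fun n => K * (2/3) ^ n).
  auto. apply is_lim_seq_const.
  replace (Finite 0) with (Rbar_mult K 0) by (simpl; f_equal; ring).
  apply is_lim_seq_scal_l. apply is_lim_seq_geom. rewrite Rabs_right; lra.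
Qed.

Lemma ge1_map k a n : (1 <= a)%nat -> (forall i, (1 <= i)%nat -> (1 <= k i)%nat) -> ge1 (map k (seq a n)).
Proof.
  intros Ha Hk. unfold ge1. apply Forall_forall. intros x Hx.
  apply in_map_iff in Hx. destruct Hx as [i [Hi Hin]]. apply in_seq in Hin. subst. apply Hk. lia.
Qed.

Theorem lemma3p2 (k : nat -> nat) (hk : in_T k) :
  is_lim_seq (fun r => zs_Delta k r) 0%R.
Proof.
  destruct hk as [Hge [Hk1 Hk2]].
  destruct (Nat.eq_dec (k 1%nat) 2) as [E2k|N2].
  - destruct (Hk2 E2k) as [s [Hs Hks]].
    apply (is_lim_seq_incr_n _ s).
    apply squeeze with (K := 18 * 3 ^ length (map k (seq 2 (s - 2)))).
    intros n.
    assert (Hpre : prefix k (n + s) = k 1%nat :: map k (seq 2 (s - 2 + S n))).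
    { unfold prefix. replace (n + s)%nat with (S (s - 2 + S n)) by lia. reflexivity. }
    unfold zs_Delta. rewrite Hpre.
    set (mid := map k (seq 2 (s - 2))).
    set (tl := map k (seq (S s) n)).
    assert (Hl : map k (seq 2 (s - 2 + S n)) = mid ++ (k s :: tl)).
    { unfold mid, tl. rewrite seq_app, map_app. replace (2 + (s - 2))%nat with s by lia. reflexivity. }
    set (c0 := (2/3) ^ (S n)).
    assert (Hc0 : 0 <= c0) by (apply pow_le; lra).
    assert (Htl : forall m, (1 <= m)%nat -> 0 <= d tl m <= c0 * P (3/2) m).
    { intros m Hm. assert (Hg : ge1 tl) by (apply ge1_map; auto; lia).
      pose proof (G1 tl Hg m Hm) as [A B]. assert (Hlen : length tl = n) by (unfold tl; rewrite length_map, length_seq; auto). rewrite Hlen in B.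
      fold c0 in B. split; auto. pose proof (P_ge1 (3/2) m ltac:(lra)). nra. }
    assert (Hs2 : forall m, (1 <= m)%nat -> 0 <= d (k s :: tl) m <= 6 * c0 * P (1/2) m).
    { intros m Hm. rewrite d_cons. apply Gs; auto. }
    assert (Hmid : forall m, (1 <= m)%nat -> 0 <= d (mid ++ k s :: tl) m <= 6 * c0 * 3 ^ length mid * P (1/2) m).
    { apply G3; auto. apply ge1_map; auto; lia. lra. }
    apply DeltaBound. lia. apply ge1_map; auto; lia.
    intros N. rewrite d_cons. rewrite Hl.
    pose proof (Gout2 (d (mid ++ k s :: tl)) (6 * c0 * 3 ^ length mid) (k 1%nat)) as G.
    assert (0 <= 3 ^ length mid) by (apply pow_le; lra).
    destruct (G ltac:(apply Rmult_le_pos; lra) ltac:(lia) Hmid N) as [A B]. split; auto.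
    eapply Rle_trans. apply B. unfold c0. simpl. fold mid.
    assert (0 <= (2/3) ^ n) by (apply pow_le; lra).
    nra.
  - apply (is_lim_seq_incr_n _ 1).
    apply squeeze with (K := 6).
    intros n.
    assert (Hpre : prefix k (n + 1) = k 1%nat :: map k (seq 2 n)).
    { unfold prefix. replace (n + 1)%nat with (S n) by lia. reflexivity. }
    unfold zs_Delta. rewrite Hpre.
    set (tl := map k (seq 2 n)).
    set (c0 := (2/3) ^ (S n)).
    assert (Hc0 : 0 <= c0) by (apply pow_le; lra).
    assert (Htl : forall m, (1 <= m)%nat -> 0 <= d tl m <= c0 * P (3/2) m).
    { intros m Hm. assert (Hg : ge1 tl) by (apply ge1_map; auto; lia).
      pose proof (G1 tl Hg m Hm) as [A B]. assert (Hlen : length tl = n) by (unfold tl; rewrite length_map, length_seq; auto). rewrite Hlen in B.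
      fold c0 in B. split; auto. pose proof (P_ge1 (3/2) m ltac:(lra)). nra. }
    apply DeltaBound. lia. apply ge1_map; auto; lia.
    intros N. rewrite d_cons.
    destruct (Gout3 (d tl) c0 (k 1%nat) Hc0 ltac:(lia) Htl N) as [A B]. split; auto.
    eapply Rle_trans. apply B. unfold c0. simpl.
    assert (0 <= (2/3) ^ n) by (apply pow_le; lra). nra.
Qed.
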